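(* Let $R \subseteq \mathbb{N}$ be computably enumerable and let $A \subseteq \mathbb{N}$ be bi-immune. Then the symmetric difference $A \oplus R = (A - R) \cup (R - A)$ is bi-immune.
   Context: $\mathbb{N}$ denotes the non-negative integers; $\overline{A} = \mathbb{N} - A$. A set $A \subseteq \mathbb{N}$ is immune if (i) $A$ is infinite, and (ii) for every infinite computably enumerable set $R \subseteq \mathbb{N}$, $R \cap \overline{A} \neq \emptyset$ (i.e. $A$ contains no infinite c.e. subset). $A$ is bi-immune if both $A$ and $\overline{A}$ are immune. *)

(* Defs.v *)
From Stdlib Require Import List Arith.
Import ListNotations.

Inductive recf : nat -> Type :=
| rzero (n : nat) : recf n
| rsucc : recf 1
| rproj (n i : nat) : recf n                       (* i-th argument (0-based) *)
| rcomp (n m : nat) (f : recf m) (gs : recfs n m) : recf n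
| rprec (n : nat) (g : recf n) (h : recf (S (S n))) : recf (S n)
| rmu (n : nat) (f : recf (S n)) : recf n
with recfs : nat -> nat -> Type :=
| rnil (n : nat) : recfs n 0
| rcons (n m : nat) (g : recf n) (gs : recfs n m) : recfs n (S m).

Inductive evalf : forall n, recf n -> list nat -> nat -> Prop :=
| ev_zero n xs : evalf n (rzero n) xs 0
| ev_succ x : evalf 1 rsucc [x] (S x)
| ev_proj n i xs : i < n -> evalf n (rproj n i) xs (nth i xs 0)
| ev_comp n m f gs xs ys v :
    evals n m gs xs ys -> evalf m f ys v -> evalf n (rcomp n m f gs) xs v
| ev_prec0 n g h xs v :
    evalf n g xs v -> evalf (S n) (rprec n g h) (0 :: xs) v
| ev_precS n g h y xs w v :
    evalf (S n) (rprec n g h) (y :: xs) w ->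
    evalf (S (S n)) h (y :: w :: xs) v ->
    evalf (S n) (rprec n g h) (S y :: xs) v
| ev_mu n f xs y :
    evalf (S n) f (y :: xs) 0 ->
    (forall z, z < y -> exists k, evalf (S n) f (z :: xs) (S k)) ->
    evalf n (rmu n f) xs y
with evals : forall n m, recfs n m -> list nat -> list nat -> Prop :=
| evs_nil n xs : evals n 0 (rnil n) xs []
| evs_cons n m g gs xs y ys :
    evalf n g xs y -> evals n m gs xs ys ->
    evals n (S m) (rcons n m g gs) xs (y :: ys).

Definition ce (R : nat -> Prop) : Prop :=
  exists f : recf 1, forall x, R x <-> exists v, evalf 1 f [x] v.

Definition infinite_set (A : nat -> Prop) : Prop :=
  forall n, exists m, n <= m /\ A m.

Definition compl (A : nat -> Prop) : nat -> Prop := fun x => ~ A x.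

Definition immune (A : nat -> Prop) : Prop :=
  infinite_set A /\
  forall R, ce R -> infinite_set R -> exists x, R x /\ compl A x.

Definition bi_immune (A : nat -> Prop) : Prop :=
  immune A /\ immune (compl A).

Definition symdiff (A R : nat -> Prop) : nat -> Prop :=
  fun x => (A x /\ ~ R x) \/ (R x /\ ~ A x).

(* Main.v *)
Require Import Defs.
From Stdlib Require Import List Arith Lia Eqdep_dec Classical.
Import ListNotations.

Ltac injp := repeat match goal with H : existT _ _ _ = existT _ _ _ |- _ =>
  apply inj_pair2_eq_dec in H; [|exact Nat.eq_dec] end; subst.

Lemma inv_comp n m f gs xs v : evalf n (rcomp n m f gs) xs v ->
  exists ys, evals n m gs xs ys /\ evalf m f ys v.
Proof. intros H; inversion H; subst; injp; eauto. Qed.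

Lemma inv_nil n xs ys : evals n 0 (rnil n) xs ys -> ys = [].
Proof. intros H; inversion H; subst; injp; auto. Qed.

Lemma inv_cons n m g gs xs ys : evals n (S m) (rcons n m g gs) xs ys ->
  exists y ys', ys = y :: ys' /\ evalf n g xs y /\ evals n m gs xs ys'.
Proof. intros H; inversion H; subst; injp; eauto. Qed.

Lemma inv_proj n i xs v : evalf n (rproj n i) xs v -> v = nth i xs 0.
Proof. intros H; inversion H; subst; injp; auto. Qed.

Lemma inv_zero n xs v : evalf n (rzero n) xs v -> v = 0.
Proof. intros H; inversion H; subst; injp; auto. Qed.

Lemma inv_succ xs v : evalf 1 rsucc xs v -> exists x, xs = [x] /\ v = S x.
Proof. intros H; inversion H; subst; injp; eauto. Qed.

Lemma inv_prec0 n g h xs v : evalf (S n) (rprec n g h) (0 :: xs) v -> evalf n g xs v.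
Proof. intros H; inversion H; subst; injp; auto. Qed.

Lemma inv_precS n g h y xs v : evalf (S n) (rprec n g h) (S y :: xs) v ->
  exists w, evalf (S n) (rprec n g h) (y :: xs) w /\ evalf (S (S n)) h (y :: w :: xs) v.
Proof. intros H; inversion H; subst; injp; eauto. Qed.

Lemma inv_mu n f xs y : evalf n (rmu n f) xs y -> evalf (S n) f (y :: xs) 0.
Proof. intros H; inversion H; subst; injp; auto. Qed.

Definition inter (f g : recf 1) : recf 1 :=
  rcomp 1 2 (rzero 2) (rcons 1 1 f (rcons 1 0 g (rnil 1))).

Lemma ce_inter P Q : ce P -> ce Q -> ce (fun x => P x /\ Q x).
Proof.
  intros [f Hf] [g Hg]. exists (inter f g). intros x. split.
  - intros [HP HQ]. apply Hf in HP as [a Ha]. apply Hg in HQ as [b Hb].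
    exists 0. econstructor. econstructor; [exact Ha|]. econstructor; [exact Hb|].
    constructor. constructor.
  - intros [v Hv]. apply inv_comp in Hv as [ys [Hys _]].
    apply inv_cons in Hys as [a [ys' [_ [Ha Hys]]]].
    apply inv_cons in Hys as [b [ys'' [_ [Hb _]]]].
    split; [apply Hf | apply Hg]; eauto.
Qed.

Fixpoint cn (k : nat) : recf 0 :=
  match k with 0 => rzero 0 | S k => rcomp 0 1 rsucc (rcons 0 0 (cn k) (rnil 0)) end.

Lemma cn_ok k : evalf 0 (cn k) [] k.
Proof. induction k; simpl. constructor. econstructor. econstructor; [exact IHk|constructor].
  constructor. Qed.

Lemma cn_sound k v : evalf 0 (cn k) [] v -> v = k.
Proof. revert v; induction k; simpl; intros v H. apply inv_zero in H; auto.
  apply inv_comp in H as [ys [Hys H]]. apply inv_cons in Hys as [a [ys' [-> [Ha _]]]].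
  apply inv_succ in H as [x [Hx ->]]. injection Hx as ->. f_equal; auto. Qed.

Definition rpred : recf 1 := rprec 0 (rzero 0) (rproj 2 0).

Lemma pred_ok x : evalf 1 rpred [x] (Nat.pred x).
Proof. destruct x; simpl. constructor; constructor.
  assert (H : evalf 1 rpred [x] (Nat.pred x)).
  { induction x. constructor; constructor. econstructor. apply IHx.
    replace (Nat.pred (S x)) with (nth 0 [x; Nat.pred x] 0) by reflexivity.
    constructor; lia. }
  econstructor. apply H. replace x with (nth 0 [x; Nat.pred x] 0) at 2 by reflexivity.
  constructor; lia.
Qed.

Lemma pred_sound x v : evalf 1 rpred [x] v -> v = Nat.pred x.
Proof. destruct x; intros H. apply inv_prec0 in H. apply inv_zero in H; auto.
  apply inv_precS in H as [w [_ H]]. apply inv_proj in H. auto. Qed.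

Definition rsub (n : nat) : recf 1 :=
  rprec 0 (cn n) (rcomp 2 1 rpred (rcons 2 0 (rproj 2 1) (rnil 2))).

Lemma sub_ok n x : evalf 1 (rsub n) [x] (n - x).
Proof. induction x. replace (n - 0) with n by lia. constructor. apply cn_ok.
  econstructor. apply IHx. econstructor.
  econstructor. replace (n - x) with (nth 1 [x; n - x] 0) by reflexivity. constructor; lia.
  constructor. replace (n - S x) with (Nat.pred (n - x)) by lia. apply pred_ok. Qed.

Lemma sub_sound n x v : evalf 1 (rsub n) [x] v -> v = n - x.
Proof. revert v; induction x; intros v H.
  apply inv_prec0 in H. apply cn_sound in H. lia.
  apply inv_precS in H as [w [Hw H]]. apply IHx in Hw. subst w.
  apply inv_comp in H as [ys [Hys H]]. apply inv_cons in Hys as [a [ys' [-> [Ha Hys]]]].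
  apply inv_nil in Hys. subst. apply inv_proj in Ha. simpl in Ha. subst.
  apply pred_sound in H. lia. Qed.

Definition rge (n : nat) : recf 1 :=
  rmu 1 (rcomp 2 1 (rsub n) (rcons 2 0 (rproj 2 1) (rnil 2))).

Lemma ce_ge n : ce (fun x => n <= x).
Proof.
  exists (rge n). intros x. split.
  - intros Hx. exists 0. constructor.
    + econstructor. econstructor.
      apply (ev_proj 2 1 [0; x]); lia. constructor.
      simpl. replace 0 with (n - x) at 2 by lia. apply sub_ok.
    + intros; lia.
  - intros [v Hv]. apply inv_mu in Hv.
    apply inv_comp in Hv as [ys [Hys H]]. apply inv_cons in Hys as [a [ys' [-> [Ha Hys]]]].
    apply inv_nil in Hys. subst. apply inv_proj in Ha. simpl in Ha. subst.
    apply sub_sound in H. lia.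
Qed.

Lemma immune_inf B W : immune B -> ce W -> infinite_set W ->
  infinite_set (fun x => W x /\ compl B x).
Proof.
  intros [_ HB] HW Hinf n.
  destruct (HB (fun x => W x /\ n <= x)) as [x [[Wx Hx] Bx]].
  - apply ce_inter; auto. apply ce_ge.
  - intros k. destruct (Hinf (max n k)) as [m [Hm Wm]]. exists m. split; [lia|]. split; auto; lia.
  - exists x; auto.
Qed.

Lemma immune_ext A B : (forall x, A x <-> B x) -> immune A -> immune B.
Proof.
  intros E [Hi HA]. split.
  - intros n. destruct (Hi n) as [m [? ?]]. exists m. split; auto. apply E; auto.
  - intros R HR HRi. destruct (HA R HR HRi) as [x [? Hx]]. exists x. split; auto.
    intros Bx. apply Hx, E, Bx.
Qed.

Lemma main_imm (R A : nat -> Prop) :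
  ce R -> immune A -> immune (compl A) -> immune (symdiff A R).
Proof.
  intros HR HA HcA. split.
  - intros n.
    destruct (classic (exists m, n <= m /\ A m /\ ~ R m)) as [[m [? [? ?]]]|Hn].
    + exists m. split; auto. left; auto.
    + assert (Rinf : infinite_set R).
      { intros k. destruct (proj1 HA (max n k)) as [m [Hm Am]]. exists m. split; [lia|].
        apply NNPP. intros nR. apply Hn. exists m. repeat split; auto; lia. }
      destruct (immune_inf A R HA HR Rinf n) as [m [Hm [Rm nAm]]].
      exists m. split; auto. right; auto.
  - intros W HW HWi. apply NNPP. intros Hno.
    assert (Hin : forall x, W x -> symdiff A R x).
    { intros x Wx. apply NNPP. intros nS. apply Hno. exists x. split; auto. }
    destruct (classic (infinite_set (fun x => W x /\ R x))) as [Hi|Hf].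
    + destruct (immune_inf (compl A) _ HcA (ce_inter _ _ HW HR) Hi 0)
        as [x [_ [[Wx Rx] nnA]]].
      destruct (Hin x Wx) as [[? ?]|[? ?]]; auto.
    + assert (Hf' : exists n, forall m, n <= m -> ~ (W m /\ R m)).
      { apply NNPP. intros H. apply Hf. intros n. apply NNPP. intros H2. apply H.
        exists n. intros m Hm Hwr. apply H2. exists m; auto. }
      destruct Hf' as [n Hn].
      destruct (immune_inf A (fun x => W x /\ n <= x) HA (ce_inter _ _ HW (ce_ge n)) ) with (n := 0)
        as [x [_ [[Wx Hx] nAx]]].
      { intros k. destruct (HWi (max n k)) as [m [Hm Wm]]. exists m. split; [lia|]. split; auto; lia. }
      destruct (Hin x Wx) as [[? ?]|[Rx ?]]; auto.
      apply (Hn x Hx); auto.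
Qed.

Theorem lemma2p3 (R A : nat -> Prop) :
  ce R -> bi_immune A -> bi_immune (symdiff A R).
Proof.
  intros HR [HA HcA]. split.
  - apply main_imm; auto.
  - assert (HccA : immune (compl (compl A))) by
      (apply (immune_ext A); auto; intros x; unfold compl; split; auto; apply NNPP).
    apply (immune_ext (symdiff (compl A) R)).
    + intros x. unfold symdiff, compl. split.
      * intros [[? ?]|[? ?]] [[? ?]|[? ?]]; auto.
      * intros H. destruct (classic (A x)); destruct (classic (R x)); tauto.
    + apply main_imm; auto.
Qed.
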